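(* Let $G=(V,E)$ be a finite graph, $A\subset V$ with $|A|$ even, $x_e>0$ and $p_e\in[0,1)$ for $e\in E$. Then for all $\omega\in\{0,1\}^E$, $$2^{|\omega|}(\ell^A_x\cup\mathbb{P}_p)[\omega]\propto\Big(\ell^A_{\frac{2x}{1+p}}\cup\mathbb{P}_{\frac{2p}{1+p}}\Big)[\omega].$$ In particular, if $J_e>0$ and $t_e=\tanh(J_e)$, then $2^{|\omega|}(\ell^A_t\cup\mathbb{P}_{t^2})[\omega]\propto\mathbf{P}^A_{2J}[\omega]$.
   Context: Configurations are identified with sets of open edges; $|\omega|$ is the number of open edges. $\partial F$ denotes the set of odd-degree vertices of $(V,F)$. For positive weights $y$, $\ell^A_y[\omega]\propto\prod_{e\in\omega}y_e\mathbf{1}[\partial\omega=A]$. $\mathbb{P}_r$ is Bernoulli percolation with edge $e$ open with probability $r_e$; vector operations are coordinatewise. $\pi\cup\nu$ is the law of the union of independent samples of $\pi,\nu$. $\mathbf{P}^A_{2J}$ is the single random current with sources $A$ and couplings $(2J_e)$: the law of $\{e:n_e>0\}$ for independent $n_e\sim$ Poisson$(2J_e)$ conditioned on the set of vertices $v$ with $\sum_{e\ni v}n_e$ odd being $A$. The proportionality is as functions of $\omega$ (both sides assumed defined). *)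

(* Defs.v *)
From HB Require Import structures.
From mathcomp Require Import all_boot all_order all_algebra.
From mathcomp Require Import all_classical all_reals all_analysis.
Set Implicit Arguments. Unset Strict Implicit. Unset Printing Implicit Defensive.
Import Order.TTheory GRing.Theory Num.Theory.
Local Open Scope ring_scope.

(* A finite (multi)graph: vertex type V, edge type E, each edge e having
   endpoints src e and tgt e.  Configurations are sets of open edges. *)
Section Defs.
Context {R : realType} {V E : finType} (src tgt : E -> V).

Definition incident (v : V) (e : E) : bool := (src e == v) || (tgt e == v).

Definition bdry (F : {set E}) : {set V} :=
  [set v | odd #|[set e in F | incident v e]|].

Definition ell_weight (A : {set V}) (y : E -> R) (w : {set E}) : R :=
  if bdry w == A then \prod_(e in w) y e else 0.
Definition ell (A : {set V}) (y : E -> R) (w : {set E}) : R :=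
  ell_weight A y w / \sum_(w' : {set E}) ell_weight A y w'.

Definition bern (r : E -> R) (w : {set E}) : R :=
  \prod_(e in w) r e * \prod_(e in ~: w) (1 - r e).

Definition lunion (pi nu : {set E} -> R) (w : {set E}) : R :=
  \sum_(eta : {set E}) \sum_(xi : {set E} | eta :|: xi == w) pi eta * nu xi.

(* single random current P^A_{c}: law of {e : n_e > 0} for independent
   n_e ~ Poisson(c_e) conditioned on the odd-vertex set of n being A *)
Definition nbdry (n : {ffun E -> nat}) : {set V} :=
  [set v | odd (\sum_(e | incident v e) n e)%N].
Definition nsupp (n : {ffun E -> nat}) : {set E} := [set e | (0 < n e)%N].
Definition current_weight (A : {set V}) (c : E -> R) (w : {set E}) : \bar R :=
  \esum_(n in [set n : {ffun E -> nat} | nbdry n = A /\ nsupp n = w])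
     (\prod_(e : E) poisson_pmf (c e) (n e))%:E.
Definition current (A : {set V}) (c : E -> R) (w : {set E}) : R :=
  fine (current_weight A c w) / fine (\sum_(w' : {set E}) current_weight A c w').

Definition tanhR (x : R) : R := (expR x - expR (- x)) / (expR x + expR (- x)).

Definition propto (f g : {set E} -> R) : Prop :=
  exists2 c : R, 0 < c & forall w, f w = c * g w.

End Defs.

(* Main.v *)
Require Import Defs.
From HB Require Import structures.
From mathcomp Require Import all_boot all_order all_algebra.
From mathcomp Require Import all_classical all_reals all_analysis.
From mathcomp Require Import ring lra.
Set Implicit Arguments. Unset Strict Implicit. Unset Printing Implicit Defensive.
Import Order.TTheory GRing.Theory Num.Theory.
Local Open Scope ring_scope.

Section A.
Context {R : realType} {V E : finType} (src tgt : E -> V).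

Lemma sum_sets (h : E -> bool -> R) :
  \sum_(xi : {set E}) \prod_e h e (e \in xi) = \prod_e (h e true + h e false).
Proof.
have -> : \prod_e (h e true + h e false) = \prod_e \sum_(b : bool) h e b.
  by apply: eq_bigr => e _; rewrite big_bool.
rewrite bigA_distr_bigA /=.
rewrite (reindex (fun f : {ffun E -> bool} => [set x | f x])) /=; last first.
  exists (fun S : {set E} => [ffun x => x \in S]) => f _.
    by apply/ffunP => x; rewrite ffunE inE.
  by apply/setP => x; rewrite inE ffunE.
by apply: eq_bigr => f _; apply: eq_bigr => e _; rewrite inE.
Qed.

Lemma prod_in (S : {set E}) (F : E -> R) :
  \prod_(e in S) F e = \prod_e (if e \in S then F e else 1).
Proof. by rewrite big_mkcond. Qed.

Lemma bernE (p : E -> R) (xi : {set E}) :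
  bern p xi = \prod_e (if e \in xi then p e else 1 - p e).
Proof.
rewrite /bern !prod_in -big_split /=; apply: eq_bigr => e _.
by rewrite !inE; case: (e \in xi); rewrite ?mulr1 ?mul1r.
Qed.

Lemma prod_nat_bool (b : E -> bool) :
  \prod_e ((b e)%:R : R) = ([forall e, b e])%:R.
Proof.
case: (boolP [forall e, b e]) => [/forallP H|].
  by rewrite big1 // => e _; rewrite H.
rewrite negb_forall => /existsP [e0 He0].
by rewrite (bigD1 e0) //= (negPf He0) mul0r.
Qed.

Lemma sum_union (p : E -> R) (eta w : {set E}) :
  \sum_(xi : {set E} | eta :|: xi == w) bern p xi =
  \prod_e (if e \in eta then ((e \in w)%:R : R) else if e \in w then p e else 1 - p e).
Proof.
rewrite big_mkcond /=.
pose h := fun e b => ((((e \in eta) || b) == (e \in w))%:R * (if b then p e else 1 - p e) : R).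
transitivity (\sum_(xi : {set E}) \prod_e h e (e \in xi)).
  apply: eq_bigr => xi _ /=.
  rewrite big_split /= prod_nat_bool bernE.
  have -> : (eta :|: xi == w) = [forall e, ((e \in eta) || (e \in xi)) == (e \in w)].
    apply/eqP/forallP => [<- e|H]; first by rewrite !inE.
    by apply/setP => e; rewrite !inE; apply/eqP.
  by case: [forall e, _]; rewrite ?mul1r ?mul0r.
rewrite sum_sets; apply: eq_bigr => e _; rewrite /h.
by case: (e \in eta); case: (e \in w) => /=; rewrite ?mul1r ?mul0r ?add0r ?addr0 //; ring.
Qed.

Definition Wf (A : {set V}) (a : E -> bool -> bool -> R) (w : {set E}) : R :=
  \sum_(eta : {set E} | bdry src tgt eta == A) \prod_e a e (e \in eta) (e \in w).

Definition uu (x p : E -> R) (e : E) (b1 b2 : bool) : R :=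
  if b1 then (if b2 then x e else 0) else (if b2 then p e else 1 - p e).

Definition Zf (A : {set V}) (x : E -> R) : R :=
  \sum_(w' : {set E}) ell_weight src tgt A x w'.

Lemma lunionE (A : {set V}) (x p : E -> R) (w : {set E}) :
  lunion (ell src tgt A x) (bern p) w = Wf A (uu x p) w / Zf A x.
Proof.
rewrite /lunion /Wf /ell -/(Zf A x) mulr_suml [RHS]big_mkcond /=.
apply: eq_bigr => eta _.
rewrite -mulr_sumr sum_union /ell_weight.
case: (bdry src tgt eta == A); last by rewrite !mul0r.
rewrite mulrAC; congr (_ * _).
rewrite prod_in -big_split /=; apply: eq_bigr => e _.
by rewrite /uu; case: (e \in eta); case: (e \in w); rewrite /= ?mul1r ?mulr1 ?mulr0.
Qed.


Lemma Wf_scale (A : {set V}) (a b : E -> bool -> bool -> R) (k : E -> R) :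
  (forall e b1 b2, a e b1 b2 = k e * b e b1 b2) ->
  forall w, Wf A a w = \prod_e k e * Wf A b w.
Proof.
move=> H w; rewrite /Wf mulr_sumr; apply: eq_bigr => eta _.
by rewrite -big_split; apply: eq_bigr => e _; exact: H.
Qed.

Lemma pow2_Wf (A : {set V}) (a : E -> bool -> bool -> R) (w : {set E}) :
  2 ^+ #|w| * Wf A a w = Wf A (fun e b1 b2 => (if b2 then 2 else 1) * a e b1 b2) w.
Proof.
have -> : (2 : R) ^+ #|w| = \prod_e (if e \in w then 2 else 1).
  by rewrite -prod_in prodr_const.
rewrite /Wf mulr_sumr; apply: eq_bigr => eta _.
by rewrite -big_split.
Qed.

Lemma Wf_ge0 (A : {set V}) (a : E -> bool -> bool -> R) (w : {set E}) :
  (forall e b1 b2, 0 <= a e b1 b2) -> 0 <= Wf A a w.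
Proof.
move=> H; apply: sumr_ge0 => eta _; apply: prodr_ge0 => e _; exact: H.
Qed.

Lemma sumWf_gt0 (A : {set V}) (a : E -> bool -> bool -> R) :
  (forall e b1 b2, 0 <= a e b1 b2) -> (forall e, 0 < a e true true) ->
  (forall e, 0 < a e false false) -> (exists F, bdry src tgt F = A) ->
  0 < \sum_w Wf A a w.
Proof.
move=> H0 H1 H2 [F HF].
rewrite (bigD1 F) //=.
have HW : 0 < Wf A a F.
  rewrite /Wf (bigD1 F) /=; last by rewrite HF.
  apply: (lt_le_trans (y := \prod_e a e (e \in F) (e \in F))).
    by apply: prodr_gt0 => e _; case: (e \in F).
  rewrite lerDl; apply: sumr_ge0 => eta _; apply: prodr_ge0 => e _; exact: H0.
apply: (lt_le_trans HW); rewrite lerDl; apply: sumr_ge0 => w _; exact: Wf_ge0.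
Qed.

Lemma Zf_gt0 (A : {set V}) (x : E -> R) :
  (forall e, 0 < x e) -> (exists F, bdry src tgt F = A) -> 0 < Zf A x.
Proof.
move=> H [F HF]; rewrite /Zf (bigD1 F) //=.
have HW : 0 < ell_weight src tgt A x F.
  by rewrite /ell_weight HF eqxx; apply: prodr_gt0 => e _.
apply: (lt_le_trans HW); rewrite lerDl; apply: sumr_ge0 => w _.
rewrite /ell_weight; case: ifP => // _; apply: prodr_ge0 => e _; exact/ltW.
Qed.

Lemma part1 (A : {set V}) (hdef : exists F : {set E}, bdry src tgt F = A)
  (x p : E -> R) : (forall e, 0 < x e) -> (forall e, 0 <= p e < 1) ->
     propto (fun w => 2 ^+ #|w| * lunion (ell src tgt A x) (bern p) w)
            (lunion (ell src tgt A (fun e => 2 * x e / (1 + p e)))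
                    (bern (fun e => 2 * p e / (1 + p e)))).
Proof.
move=> xpos prange.
have p1 e : 0 < 1 + p e by case/andP: (prange e) => H _; lra.
have ypos e : 0 < 2 * x e / (1 + p e).
  by apply: divr_gt0 => //; apply: mulr_gt0 => //.
have Zx := Zf_gt0 xpos hdef.
have Zy := Zf_gt0 ypos hdef.
exists (\prod_e (1 + p e) * Zf A (fun e => 2 * x e / (1 + p e)) / Zf A x).
  apply: divr_gt0 => //; apply: mulr_gt0 => //; apply: prodr_gt0 => e _; exact: p1.
move=> w; rewrite !lunionE mulrA pow2_Wf.
rewrite (@Wf_scale A _ (uu (fun e => 2 * x e / (1 + p e)) (fun e => 2 * p e / (1 + p e)))
   (fun e => 1 + p e)); last first.
  move=> e b1 b2; have := p1 e; rewrite /uu => pe.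
  have pe0 : 1 + p e != 0 by rewrite gt_eqF.
  by case: b1; case: b2; field.
have Zx0 : Zf A x != 0 by rewrite gt_eqF.
have Zy0 : Zf A (fun e => 2 * x e / (1 + p e)) != 0 by rewrite gt_eqF.
field.
by rewrite Zy0 Zx0.
Qed.

End A.

Section B.
Context {R : realType}.
Local Open Scope ereal_scope.

Lemma esumZ (T : choiceType) (I : set T) (a : T -> \bar R) (r : R) :
  (0 <= r)%R -> (forall i, 0 <= a i) ->
  \esum_(i in I) (r%:E * a i) = r%:E * \esum_(i in I) a i.
Proof.
move=> r0 a0; rewrite /esum -ereal_supZl //; last first.
  apply/set0P; exists (\sum_(i \in set0) a i); exists set0 => //; exact: fsets_set0.
congr ereal_sup; apply/seteqP; split => y /=.
  case=> X HX <-; exists (\sum_(i \in X) a i); first by exists X.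
  by rewrite ge0_mule_fsumr.
by case=> z [X HX <-] <-; exists X => //; rewrite ge0_mule_fsumr.
Qed.

End B.

Section C.
Context {R : realType} {E : finType}.
Variables (P : E -> nat -> bool) (g : E -> nat -> R) (s : E -> R).
Hypothesis g0 : forall e k, (0 <= g e k)%R.
Hypothesis Hs : forall e, \esum_(k in [set k | P e k]) (g e k)%:E = (s e)%:E.
Local Open Scope ereal_scope.

Lemma s0 e : (0 <= s e)%R.
Proof.
rewrite -lee_fin -Hs; apply: esum_ge0 => k _; rewrite lee_fin; exact: g0.
Qed.

Definition TS (S : {set E}) : set {ffun E -> nat} :=
  [set n | forall e, if e \in S then P e (n e) else n e == 0%N].

Lemma prod_esum_S (S : {set E}) :
  \esum_(n in TS S) (\prod_(e in S) g e (n e))%:E = (\prod_(e in S) s e)%:E.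
Proof.
move: {2}#|S| (erefl #|S|) => k; elim: k S => [|k IH] S HS.
  have S0 : S = finset.set0 by apply/eqP; rewrite -cards_eq0 HS.
  subst S.
  have -> : TS finset.set0 = [set ([ffun=> 0%N] : {ffun E -> nat})]%classic.
    apply/seteqP; split => n /=.
      move=> H; apply/ffunP => e; rewrite ffunE; have := H e; rewrite inE.
      by move/eqP.
    by move=> -> e; rewrite inE ffunE.
  by rewrite esum_set1 ?big_set0 // lee_fin big_set0.
have [e0 He0] : exists e0, e0 \in S.
  by apply/set0Pn; rewrite -card_gt0 HS.
set S' := S :\ e0.
have HS' : #|S'| = k.
  by move: HS; rewrite (cardsD1 e0 S) He0 add1n => -[].
have prodS (F : E -> R) : (\prod_(e in S) F e = F e0 * \prod_(e in S') F e)%R.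
  rewrite (bigD1 e0) //=; congr (_ * _)%R.
  by apply: eq_bigl => e; rewrite !inE andbC.
pose phi := fun kn : nat * {ffun E -> nat} => [ffun e => if e == e0 then kn.1 else kn.2 e].
rewrite (reindex_esum ([set k | P e0 k] `*`` (fun _ => TS S')) (TS S) phi); last first.
  split.
  - move=> [j n] /= [Pj Hn] e; rewrite ffunE.
    case: (eqVneq e e0) => [->|ne]; first by rewrite He0.
    have := Hn e; rewrite !inE ne /=; by [].
  - move=> [j n] [j' n']; rewrite !in_setE /= => -[_ Hn] [_ Hn'] Heq.
    have n0 : n e0 = 0%N by apply/eqP; have := Hn e0; rewrite !inE eqxx.
    have n0' : n' e0 = 0%N by apply/eqP; have := Hn' e0; rewrite !inE eqxx.
    have := congr1 (fun f : {ffun E -> nat} => f e0) Heq; rewrite /= !ffunE eqxx /= => ->.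
    congr pair; apply/ffunP => e; case: (eqVneq e e0) => [->|ne]; first by rewrite n0 n0'.
    by have := congr1 (fun f : {ffun E -> nat} => f e) Heq; rewrite /= !ffunE (negPf ne).
  - move=> m Hm; exists (m e0, [ffun e => if e == e0 then 0%N else m e]).
      split => /=; first by have := Hm e0; rewrite He0.
      by move=> e; rewrite ffunE !inE; have := Hm e; case: (e == e0).
    by apply/ffunP => e; rewrite !ffunE /=; case: (eqVneq e e0) => [->|].
transitivity (\esum_(kn in [set k | P e0 k] `*`` (fun _ => TS S'))
   ((g e0 kn.1)%:E * (\prod_(e in S') g e (kn.2 e))%:E)).
  apply: eq_esum => -[j n] _ /=; rewrite -EFinM prodS /phi ffunE eqxx /=.
  congr (_%:E); congr (_ * _)%R; apply: eq_bigr => e; rewrite !inE => /andP [ne _].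
  by rewrite ffunE (negPf ne).
rewrite -(esum_esum (a := fun (j : nat) (n : {ffun E -> nat}) => (g e0 j)%:E * (\prod_(e in S') g e (n e))%:E)); last first.
  by move=> i j _ _; apply: mule_ge0; rewrite lee_fin // prodr_ge0.
have inner j : \esum_(n in TS S') ((g e0 j)%:E * (\prod_(e in S') g e (n e))%:E)
    = (\prod_(e in S') s e)%:E * (g e0 j)%:E.
  rewrite esumZ ?IH //; first by rewrite muleC.
  by move=> n; rewrite lee_fin prodr_ge0.
rewrite (eq_esum (fun j _ => inner j)).
rewrite esumZ ?Hs; last 2 first.
- by apply: prodr_ge0 => e _; exact: s0.
- by move=> i; rewrite lee_fin.
by rewrite -EFinM prodS mulrC.
Qed.

Lemma prod_esum :
  \esum_(n in [set n : {ffun E -> nat} | forall e, P e (n e)]%classic) (\prod_e g e (n e))%:E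
  = (\prod_e s e)%:E.
Proof.
have := prod_esum_S [set: E].
have -> : TS [set: E] = [set n : {ffun E -> nat} | forall e, P e (n e)]%classic.
  apply/seteqP; split => n H e.
    by have := H e; rewrite finset.in_setT.
  by rewrite finset.in_setT; apply: H.
have E1 (F : E -> R) : (\prod_(e in [set: E]) F e = \prod_e F e)%R.
  by apply: eq_bigl => e; rewrite finset.in_setT.
rewrite E1 => <-; apply: eq_esum => n _; by rewrite E1.
Qed.

End C.

Import numFieldNormedType.Exports.
Local Open Scope classical_set_scope.

Section D.
Context {R : realType}.

Lemma exp_cvg (x : R) : series (exp_coeff x) @ \oo --> expR x.
Proof. exact: is_cvg_series_exp_coeff. Qed.

Lemma cvg_comb (u v : R^nat) (a b k1 k2 : R) : u @ \oo --> a -> v @ \oo --> b ->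
  (fun n => k1 * u n + k2 * v n) @ \oo --> k1 * a + k2 * b.
Proof.
move=> hu hv; apply: cvgD; [exact: cvgMl_tmp | exact: cvgMl_tmp].
Qed.

Lemma exp_coeff_neg (c : R) k : exp_coeff (-c) k = (-1) ^+ (odd k) * exp_coeff c k.
Proof. by rewrite !exp_coeffE /= [(- c) ^+ _]exprNn signr_odd mulrCA. Qed.

Lemma cvg_par (b : bool) (c : R) :
  series (fun k => if odd k == b then exp_coeff c k else 0) @ \oo -->
  2^-1 * expR c + ((if b then -1 else 1) / 2) * expR (-c).
Proof.
have -> : series (fun k => if odd k == b then exp_coeff c k else 0) =
  (fun n => 2^-1 * series (exp_coeff c) n + ((if b then -1 else 1) / 2) * series (exp_coeff (-c)) n).
  apply/funext => n; rewrite /series /= !mulr_sumr -big_split /=.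
  apply: eq_bigr => k _; rewrite exp_coeff_neg.
  by case: (odd k); case: b => /=; rewrite ?expr0 ?expr1; field.
by apply: cvg_comb; exact: exp_cvg.
Qed.

Local Open Scope ereal_scope.

Lemma esum_series (Q : pred nat) (a : nat -> R) (L : R) : (forall k, 0 <= a k)%R ->
  series (fun k => if Q k then a k else 0%R) @ \oo --> L ->
  \esum_(k in [set k | Q k]) (a k)%:E = L%:E.
Proof.
move=> a0 hL; rewrite -nneseries_esum; last by move=> n _; rewrite lee_fin.
have -> : (fun n => \sum_(0 <= i < n | Q i) (a i)%:E) =
    EFin \o series (fun k => if Q k then a k else 0%R).
  apply/funext => n; rewrite /series /= sumEFin; congr EFin.
  by rewrite big_mkcond.
rewrite EFin_lim; last by apply/cvg_ex; exists L.
by rewrite (cvg_lim _ hL).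
Qed.


Lemma pmfE (c : R) k : (0 < c)%R -> poisson_pmf c k = (expR (-c) * exp_coeff c k)%R.
Proof. by move=> c0; rewrite /poisson_pmf c0 exp_coeffE /=; ring. Qed.

Lemma exp_coeff_ge0 (c : R) k : (0 <= c)%R -> (0 <= exp_coeff c k)%R.
Proof. by move=> c0; rewrite exp_coeffE /= mulr_ge0 ?invr_ge0 ?exprn_ge0. Qed.

Lemma esum_Q (Q : pred nat) (c L : R) : (0 < c)%R ->
  series (fun k => if Q k then exp_coeff c k else 0%R) @ \oo --> L ->
  \esum_(k in [set k | Q k]) (poisson_pmf c k)%:E = (expR (-c) * L)%:E.
Proof.
move=> c0 hL.
rewrite (eq_esum (b := fun k => (expR (-c))%:E * (exp_coeff c k)%:E)); last first.
  by move=> k _; rewrite pmfE // EFinM.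
rewrite esumZ; last 2 first.
- exact/ltW/expR_gt0.
- by move=> k; rewrite lee_fin exp_coeff_ge0 // ltW.
rewrite (esum_series _ hL) //; last by move=> k; rewrite exp_coeff_ge0 // ltW.
Qed.

Definition rr (c : R) (b1 b2 : bool) : R :=
  (if b1 then (if b2 then expR (-c) * (2^-1 * expR c + (-1/2) * expR (-c)) else 0)
  else (if b2 then expR (-c) * (2^-1 * expR c + (1/2) * expR (-c)) - expR (-c)
        else expR (-c)))%R.

Lemma pmf0 (c : R) : (0 < c)%R -> poisson_pmf c 0 = expR (-c).
Proof. by move=> c0; rewrite pmfE // exp_coeffE /= expr0 fact0 invr1 !mulr1. Qed.

Lemma esum_D (c : R) (b1 b2 : bool) : (0 < c)%R ->
  \esum_(k in [set k | (odd k == b1) && ((0 < k)%N == b2)]) (poisson_pmf c k)%:E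
  = (rr c b1 b2)%:E.
Proof.
move=> c0; case: b1; case: b2; rewrite /rr.
- have -> : [set k | (odd k == true) && ((0 < k)%N == true)] = [set k | odd k == true].
    by apply/seteqP; split => -[|k] //=; rewrite andbT.
  by rewrite (esum_Q c0 (cvg_par (b := true) (c := c))).
- have -> : [set k | (odd k == true) && ((0 < k)%N == false)] = set0.
    by apply/seteqP; split => -[|k] //=; rewrite andbF.
  by rewrite esum_set0.
- have H := esumID [set 0%N] [set k | odd k == false] (fun k => (poisson_pmf c k)%:E)
    (fun k _ => poisson_pmf_ge0 c k).
  have E1 : [set k | odd k == false] `&` [set 0%N] = [set 0%N].
    by apply/seteqP; split => [k [_ ->]|k ->] //.
  have E2 : [set k | odd k == false] `&` ~` [set 0%N] =
            [set k | (odd k == false) && ((0 < k)%N == true)].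
    apply/seteqP; split => -[|k] //=.
    - by case => _ /(_ erefl).
    - by case => -> _.
    - by rewrite andbT => /eqP ->.
  rewrite E1 E2 (esum_Q c0 (cvg_par (b := false) (c := c))) esum_set1 ?lee_fin ?poisson_pmf_ge0 // pmf0 // in H.
  move: H (esum_ge0 (S := [set k | (odd k == false) && ((0 < k)%N == true)])
     (a := fun k => (poisson_pmf c k)%:E) (fun k _ => poisson_pmf_ge0 c k)).
  move: (\esum_(_ in _) _) => X.
  case: X => [r||] //= H _.
  by move: H => [->]; congr EFin; ring.
- have -> : [set k | (odd k == false) && ((0 < k)%N == false)] = [set 0%N].
    by apply/seteqP; split => -[|k] //=; rewrite andbF.
  by rewrite esum_set1 ?lee_fin ?poisson_pmf_ge0 // pmf0.
Qed.

End D.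

Local Close Scope classical_set_scope.
Section F.
Context {R : realType} {V E : finType} (src tgt : E -> V).

Lemma odd_sum_card (n : {ffun E -> nat}) (v : V) :
  odd (\sum_(e | incident src tgt v e) n e) =
  odd #|[set e in [set e | odd (n e)] | incident src tgt v e]|.
Proof.
rewrite -sum1_card.
rewrite (big_morph odd oddD (erefl : odd 0 = false)) /=.
rewrite (big_morph odd oddD (erefl : odd 0 = false)) /=.
rewrite [RHS](eq_bigl (fun e => incident src tgt v e && odd (n e))); last first.
  by move=> e; rewrite !inE andbC.
rewrite [RHS]big_mkcondr /=; apply: eq_bigr => e _.
by case: (odd (n e)).
Qed.

Lemma nbdryE (n : {ffun E -> nat}) :
  nbdry src tgt n = bdry src tgt [set e | odd (n e)].
Proof. by apply/setP => v; rewrite !inE odd_sum_card. Qed.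

Definition Dp (b1 b2 : bool) (k : nat) := (odd k == b1) && ((0 < k)%N == b2).

Definition TT (eta w : {set E}) : set {ffun E -> nat} :=
  [set n : {ffun E -> nat} | forall e, Dp (e \in eta) (e \in w) (n e)]%classic.

Lemma TT_char (eta w : {set E}) (n : {ffun E -> nat}) :
  TT eta w n -> eta = [set e | odd (n e)] /\ nsupp n = w.
Proof.
move=> H; split; apply/setP => e; rewrite !inE; have /andP [/eqP h1 /eqP h2] := H e.
  by [].
by [].
Qed.

Lemma TT_odd (w : {set E}) (n : {ffun E -> nat}) :
  nsupp n = w -> TT [set e | odd (n e)] w n.
Proof.
move=> <- e; rewrite /Dp !inE; by rewrite !eqxx.
Qed.

Local Open Scope ereal_scope.

Lemma cw_decomp (A : {set V}) (c : E -> R) (w : {set E}) :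
  current_weight src tgt A c w =
  \sum_(eta : {set E} | bdry src tgt eta == A)
     \esum_(n in TT eta w) (\prod_e poisson_pmf (c e) (n e))%:E.
Proof.
rewrite /current_weight esum_mkcond.
set f := fun n : {ffun E -> nat} => (\prod_e poisson_pmf (c e) (n e))%:E.
rewrite (eq_esum (b := fun n => \sum_(eta : {set E} | bdry src tgt eta == A)
                              (if n \in TT eta w then f n else 0))); last first.
  move=> n _.
  case: (boolP (n \in [set n : {ffun E -> nat} | nbdry src tgt n = A /\ nsupp n = w]%classic)) => nS.
    have := nS; rewrite in_setE => -[bd sp].
    rewrite (bigD1 [set e | odd (n e)]) /=; last by rewrite -nbdryE bd.
    have -> : (n \in TT [set e | odd (n e)] w) = true.
      by apply/idP; rewrite in_setE; exact: TT_odd.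
    rewrite [X in (_ + X)%R]big1 ?addr0 // => eta /andP [_ ne].
    case: ifP => // /[1!in_setE] /TT_char [h _].
    by rewrite h eqxx in ne.
  rewrite big1 // => eta /eqP bd; case: ifP => // /[1!in_setE] /TT_char [h sp].
  exfalso; move/negP: nS; apply; rewrite in_setE; split => //.
  by rewrite nbdryE -h.
rewrite esum_sum; last first.
  by move=> n eta _ _; case: ifP => // _; rewrite lee_fin prodr_ge0 // => e _; exact: poisson_pmf_ge0.
by apply: eq_bigr => eta _; rewrite [RHS]esum_mkcond.
Qed.

Lemma cwE (A : {set V}) (c : E -> R) (w : {set E}) : (forall e, 0 < c e)%R ->
  current_weight src tgt A c w = (Wf src tgt A (fun e b1 b2 => rr (c e) b1 b2) w)%:E.
Proof.
move=> c0; rewrite cw_decomp /Wf -sumEFin; apply: eq_bigr => eta _.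
rewrite /TT /Dp.
apply: (prod_esum (P := fun e k => (odd k == (e \in eta)) && ((0 < k)%N == (e \in w)))
                  (g := fun e k => poisson_pmf (c e) k)
                  (s := fun e => rr (c e) (e \in eta) (e \in w))).
- by move=> e k; exact: poisson_pmf_ge0.
- by move=> e; exact: esum_D.
Qed.


Local Close Scope ereal_scope.

Lemma tanh_range (J : R) : 0 < J -> 0 < tanhR J < 1.
Proof.
move=> J0; rewrite /tanhR expRN.
have a1 : 1 < expR J by rewrite expR_gt1.
set a := expR J in a1 *.
have a0 : 0 < a by lra.
have ai : 0 < a^-1 < 1 by rewrite invr_gt0 a0 /= invf_lt1.
apply/andP; split.
  apply: divr_gt0; lra.
by rewrite ltr_pdivrMr; lra.
Qed.

Lemma rr_scale (J : R) (b1 b2 : bool) : 0 < J ->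
  rr (2 * J) b1 b2 = (expR (- (2 * J)) / (1 - tanhR J ^+ 2)) *
    ((if b2 then 2 else 1) * (if b1 then (if b2 then tanhR J else 0)
        else (if b2 then tanhR J ^+ 2 else 1 - tanhR J ^+ 2))).
Proof.
move=> J0; have := tanh_range J0; rewrite /rr /tanhR.
have E2 : expR (2 * J) = expR J * expR J by rewrite -expRD; congr expR; ring.
rewrite !expRN E2.
have a1 : 1 < expR J by rewrite expR_gt1.
set a := expR J in a1 *.
have a0 : a != 0 by rewrite gt_eqF //; lra.
have ap : a + a^-1 != 0 by rewrite gt_eqF // addr_gt0 ?invr_gt0; lra.
move=> /andP [t0 t1].
have tt : 1 - ((a - a^-1) / (a + a^-1)) ^+ 2 != 0.
  rewrite subr_eq0 eq_sym; apply/negP => /eqP h.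
  have : ((a - a^-1) / (a + a^-1)) ^+ 2 < 1.
    by rewrite expr2; nra.
  by rewrite h ltxx.
have side : [&& a != 0, a * a + 1 != 0 & (a * a + 1) ^+ 2 - (a * a - 1) ^+ 2 != 0].
  rewrite a0 /=; apply/andP; split; rewrite gt_eqF //; first by nra.
  by rewrite !expr2; nra.
by case: b1; case: b2; field; exact: side.
Qed.



Lemma part2 (A : {set V}) (hdef : exists F : {set E}, bdry src tgt F = A)
  (J : E -> R) : (forall e, 0 < J e) ->
     propto (fun w => 2 ^+ #|w| *
               lunion (ell src tgt A (fun e => tanhR (J e)))
                      (bern (fun e => tanhR (J e) ^+ 2)) w)
            (current src tgt A (fun e => 2 * J e)).
Proof.
move=> J0.
pose t := fun e => tanhR (J e).
pose u2 := fun e b1 b2 => (if b2 then 2 else 1) * uu t (fun e => t e ^+ 2) e b1 b2.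
pose k := fun e => expR (- (2 * J e)) / (1 - t e ^+ 2).
have tr e : 0 < t e < 1 := tanh_range (J0 e).
have Hrr e b1 b2 : rr (2 * J e) b1 b2 = k e * u2 e b1 b2.
  by rewrite /u2 /uu /k /t rr_scale.
have u2ge0 e b1 b2 : 0 <= u2 e b1 b2.
  have /andP [h0 h1] := tr e.
  rewrite /u2 /uu; case: b1; case: b2 => /=; rewrite ?mulr0 ?lexx //; nra.
have tpos e : 0 < t e by have /andP [] := tr e.
have Ssum : 0 < \sum_w Wf src tgt A u2 w.
  apply: sumWf_gt0 => // e; have /andP [h0 h1] := tr e; rewrite /u2 /uu /=; nra.
have Zt : 0 < Zf src tgt A t := Zf_gt0 tpos hdef.
have kpos : 0 < \prod_e k e.
  apply: prodr_gt0 => e _; have /andP [h0 h1] := tr e.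
  rewrite /k; apply: divr_gt0; first exact: expR_gt0.
  nra.
exists ((\sum_w Wf src tgt A u2 w) / Zf src tgt A t); first exact: (divr_gt0 Ssum Zt).
move=> w.
rewrite lunionE mulrA pow2_Wf -/t.
have c0 : forall e, 0 < 2 * J e by move=> e; rewrite mulr_gt0.
have HS : (\sum_w' current_weight src tgt A (fun e => 2 * J e) w')%R =
   ((\sum_w' Wf src tgt A (fun e b1 b2 => rr (2 * J e) b1 b2) w')%:E).
  by rewrite -sumEFin; apply: eq_bigr => w' _; exact: cwE.
rewrite /current HS cwE //=.
rewrite (Wf_scale src tgt A Hrr).
have HS2 : \sum_w' Wf src tgt A (fun e b1 b2 => rr (2 * J e) b1 b2) w' =
    \prod_e k e * \sum_w' Wf src tgt A u2 w'.
  by rewrite mulr_sumr; apply: eq_bigr => w' _; exact: (Wf_scale src tgt A Hrr w').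
rewrite HS2.
have h1 : Zf src tgt A t != 0 by rewrite gt_eqF.
have h2 : \sum_w Wf src tgt A u2 w != 0 by rewrite gt_eqF.
have h3 : \prod_e k e != 0 by rewrite gt_eqF.
rewrite /u2; field.
by rewrite h1 h2 h3.
Qed.

End F.

Theorem lemmaA2 (R : realType) (V E : finType) (src tgt : E -> V)
  (noloop : forall e, src e != tgt e)
  (A : {set V}) (hA : ~~ odd #|A|)
  (hdef : exists F : {set E}, bdry src tgt F = A) :
  (forall (x p : E -> R), (forall e, 0 < x e) -> (forall e, 0 <= p e < 1) ->
     propto (fun w => 2 ^+ #|w| * lunion (ell src tgt A x) (bern p) w)
            (lunion (ell src tgt A (fun e => 2 * x e / (1 + p e)))
                    (bern (fun e => 2 * p e / (1 + p e))))) /\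
  (forall (J : E -> R), (forall e, 0 < J e) ->
     propto (fun w => 2 ^+ #|w| *
               lunion (ell src tgt A (fun e => tanhR (J e)))
                      (bern (fun e => tanhR (J e) ^+ 2)) w)
            (current src tgt A (fun e => 2 * J e))).
Proof.
split.
- by move=> x p; exact: part1.
- by move=> J; exact: part2.
Qed.
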